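(* For all integers $n\ge k\ge 1$, if $(G,I,O)$ is a geometry with $|V(G)|=n$ and $|O|=k$ which has a flow, then $|E(G)|\le kn-\binom{k+1}{2}$. Equivalently, $\Gamma(n,k)\le kn-\binom{k+1}{2}$.
   Context: Graphs are finite, simple, undirected, without self-loops; $v\sim w$ denotes adjacency. A geometry is $(G,I,O)$ with $I,O\subseteq V(G)$; $O^c=V(G)\setminus O$, $I^c=V(G)\setminus I$. A flow for $(G,I,O)$ is a pair $(f,\preceq)$, $f:O^c\to I^c$ a function, $\preceq$ a partial order on $V(G)$, such that for all $v\in O^c$, $w\in V(G)$: $v\sim f(v)$; $v\preceq f(v)$; $w\sim f(v)\Rightarrow v\preceq w$. $\Gamma(n,k)$ denotes the maximum number of edges of a graph $G$ in a geometry $(G,I,O)$ that has a flow, subject to $|V(G)|=n$ and $|O|=k$. *)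

(* Defs.v *)
From mathcomp Require Import all_boot.
Set Implicit Arguments. Unset Strict Implicit. Unset Printing Implicit Defensive.

Definition simple_graph (T : finType) (e : rel T) : Prop :=
  symmetric e /\ irreflexive e.

Definition edges (T : finType) (e : rel T) : {set {set T}} :=
  [set [set x; y] | x in T, y in T & e x y].

Definition partial_order (T : finType) (le : rel T) : Prop :=
  reflexive le /\ antisymmetric le /\ transitive le.

(* (f, le) is a flow for the geometry (G, I, O), G given by e.
   f is a total function T -> T, but only its values on O^c matter. *)
Definition is_flow (T : finType) (e : rel T) (I O : {set T})
    (f : T -> T) (le : rel T) : Prop :=
  partial_order le /\
  forall v, v \notin O ->
    [/\ f v \notin I, e v (f v), le v (f v) &
        forall w, e w (f v) -> le v w].

Definition has_flow (T : finType) (e : rel T) (I O : {set T}) : Prop :=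
  exists (f : T -> T) (le : rel T), is_flow e I O f le.

(* Main.v *)
Require Import Defs.
From mathcomp Require Import all_boot.
Set Implicit Arguments. Unset Strict Implicit. Unset Printing Implicit Defensive.

Section Aux.
Variables (T : finType) (e : rel T).

Definition E (S : {set T}) : {set {set T}} :=
  [set [set x; y] | x in S, y in S & e x y].

Lemma EP (S : {set T}) z : reflect (exists a b, [/\ a \in S, b \in S, e a b & z = [set a; b]]) (z \in E S).
Proof.
apply: (iffP imset2P).
  case=> a b Ha; rewrite inE => /andP[Hb Hab] ->; by exists a, b.
case=> a [b [Ha Hb Hab ->]]; apply: (Imset2spec Ha) => //; by rewrite inE Hb.
Qed.

Lemma E_split (S : {set T}) x : symmetric e -> x \in S ->
  #|E S| <= #|E (S :\ x)| + #|[set y in S | e x y]|.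
Proof.
move=> sym xS.
pose g := fun y => [set x; y].
apply: (leq_trans _ (leq_add (leqnn _) (leq_imset_card g _))).
apply: (leq_trans _ (leq_card_setU _ _)).
apply: subset_leq_card; apply/subsetP => z /EP [a [b [Ha Hb Hab ->]]].
rewrite in_setU.
case: (eqVneq a x) => [Hax|Hax].
  apply/orP; right; apply/imsetP; exists b; first by rewrite inE Hb -Hax.
  by rewrite /g Hax.
case: (eqVneq b x) => [Hbx|Hbx].
  apply/orP; right; apply/imsetP; exists a; first by rewrite inE Ha -Hbx sym.
  by rewrite /g Hbx setUC.
apply/orP; left; apply/EP; exists a, b; split => //; by rewrite !inE ?Hax ?Hbx.
Qed.

Variable le : rel T.
Hypothesis po : partial_order le.
Hypothesis sg : simple_graph e.

Definition flowS (S O : {set T}) (f : T -> T) :=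
  forall v, v \in S -> v \notin O ->
    [/\ f v \in S, e v (f v), le v (f v) &
        forall w, w \in S -> e w (f v) -> le v w].

Lemma main_lemma n : forall (S O : {set T}) f, #|S| = n -> O \subset S -> flowS S O f ->
  #|E S| + 'C(#|O|.+1, 2) <= #|O| * #|S|.
Proof.
case: po => [lerefl [leanti letrans]].
case: sg => [sym irr].
elim: n => [|n IH] S O f Hn OS fl.
  have S0 : S = set0 by apply/eqP; rewrite -cards_eq0 Hn.
  have -> : #|O| = 0 by apply/eqP; rewrite cards_eq0 -subset0 -S0.
  rewrite bin_small // mul0n addn0 leqn0 cards_eq0; apply/eqP/setP => z.
  rewrite inE; apply/negP => /EP [a [b [Ha _ _ _]]]; by rewrite S0 inE in Ha.
case: (set_0Vmem (S :\: O)) => [SO|[u0 Hu0]].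
  have SeqO : O = S.
    apply/eqP; rewrite eqEsubset OS /=; apply/subsetP => z zS.
    apply/negPn/negP => zO.
    have : z \in S :\: O by rewrite inE zS zO.
    by rewrite SO inE.
  subst O.
  have [x xS] : exists x, x \in S.
    apply/set0Pn; by rewrite -cards_eq0 Hn.
  have Hn' : #|S :\ x| = n by move: Hn; rewrite (cardsD1 x) xS add1n => -[].
  have IH' := IH (S :\ x) (S :\ x) f Hn' (subxx _).
  have fl' : flowS (S :\ x) (S :\ x) f by move=> v -> .
  move: (IH' fl'); rewrite Hn' => IHn.
  have Hnb : #|[set y in S | e x y]| <= n.
    rewrite -Hn'; apply: subset_leq_card; apply/subsetP => y.
    rewrite !inE => /andP[yS exy]; rewrite yS andbT.
    by apply/eqP => yx; move: exy; rewrite yx irr.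
  rewrite Hn.
  have := E_split sym xS.
  move=> H1.
  apply: (leq_trans (leq_add H1 (leqnn _))).
  rewrite binS bin1.
  move: IHn Hnb; move: #|E (S :\ x)| #|[set y in S | e x y]| 'C(n.+1, 2) => a b c IHn Hnb.
  have h : a + b + (c + n.+1) = (a + c) + (b + n.+1).
    by rewrite -!addnA; congr (_ + _); rewrite addnC -addnA; congr (_ + _); rewrite addnC.
  rewrite h; apply: (leq_trans (leq_add IHn (leq_add Hnb (leqnn _)))).
  by rewrite mulSnr mulnS addnA (addnC (n * n) n).
(* S :\: O nonempty: pick maximal u *)
pose up := fun u => [set w | le u w].
pose P := fun u => u \in S :\: O.
have := @arg_minnP _ u0 P (fun u => #|up u|) Hu0.
set u := arg_min _ _ _.
case=> {}u Hu umin.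
move: Hu; rewrite /P inE => /andP[uO uS].
have umax : forall w, w \in S -> w \notin O -> le u w -> w = u.
  move=> w wS wO luw.
  have sub : up w \subset up u.
    apply/subsetP => z; rewrite !inE => lwz; exact: letrans lwz.
  have Pw : P w by rewrite /P inE wS wO.
  have eq : up w = up u by apply/eqP; rewrite eqEcard sub umin.
  have : u \in up w by rewrite eq inE lerefl.
  rewrite inE => lwu; apply: leanti; by rewrite lwu luw.
have [fuS euf luf nb] := fl u uS uO.
set x := f u in fuS euf luf nb.
have xu : x != u by apply/eqP => h; move: euf; rewrite h irr.
have xO : x \in O.
  apply/negPn/negP => xO.
  by move: (umax x fuS xO luf) => h; rewrite h eqxx in xu.
have k1 : 0 < #|O| by apply/card_gt0P; exists x.
set S' := S :\ x.
set O' := u |: (O :\ x).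
have Hn' : #|S'| = n by move: Hn; rewrite (cardsD1 x) fuS add1n => -[].
have uOx : u \notin O :\ x by rewrite inE (negbTE uO) andbF.
have cO' : #|O'| = #|O|.
  by rewrite cardsU1 uOx (cardsD1 x O) xO add1n.
have OS' : O' \subset S'.
  apply/subsetP => z; rewrite !inE => /orP[/eqP->|/andP[zx zO]].
    by rewrite eq_sym xu uS.
  by rewrite zx (subsetP OS).
have fl' : flowS S' O' f.
  move=> v; rewrite !inE negb_or => /andP[vx vS] /andP[vu].
  rewrite vx /= => vO.
  have [fvS evf lvf nbv] := fl v vS vO.
  split; [|exact: evf|exact: lvf|].
    rewrite fvS andbT; apply/eqP => fvx.
    have l1 : le u v by apply: (nb v vS); rewrite -fvx.
    have l2 : le v u by apply: (nbv u uS); rewrite fvx.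
    by move: vu; rewrite (leanti _ _ (introT andP (conj l1 l2))) eqxx.
  move=> w; rewrite inE => /andP[_ wS]; exact: nbv.
have := IH S' O' f Hn' OS' fl'.
rewrite cO' Hn' => IHn.
have Hnb : #|[set y in S | e x y]| <= #|O|.
  rewrite -cO'; apply: subset_leq_card; apply/subsetP => y.
  rewrite !inE => /andP[yS exy].
  case: (boolP (y \in O)) => yO.
    rewrite andbT; apply/orP; right; apply/eqP => yx; move: exy; by rewrite yx irr.
  have lu : le u y by apply: (nb y yS); rewrite sym.
  by rewrite (umax y yS yO lu) eqxx.
rewrite Hn mulnS.
have := E_split sym fuS; rewrite -/S' => H1.
apply: (leq_trans (leq_add H1 (leqnn _))).
rewrite -addnA (addnC #|[set y in S | e x y]|) addnA addnC.
apply: leq_add => //; by rewrite addnC.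
Qed.

End Aux.

Theorem mainTheorem8 (T : finType) (e : rel T) (I O : {set T}) :
  simple_graph e ->
  1 <= #|O| <= #|T| ->
  has_flow e I O ->
  #|edges e| <= #|O| * #|T| - 'C(#|O|.+1, 2).
Proof.
move=> sg _ [f [le [po fl]]].
have fl' : flowS e le setT O f.
  move=> v _ vO; case: (fl v vO) => _ evf lvf nb; split; [by rewrite inE|exact: evf|exact: lvf|].
  move=> w _; exact: nb.
have := @main_lemma T e le po sg #|[set: T]| setT O f erefl (subsetT _) fl'.
rewrite cardsT => H.
have Hsub : #|edges e| <= #|E e setT|.
  apply: subset_leq_card; apply/subsetP => z /imset2P [a b Ha].
  rewrite inE => /andP[_ hab] ->.
  by apply/EP; exists a, b; rewrite !inE.
rewrite leq_subRL; last by apply: leq_trans H; rewrite leq_addl.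
by rewrite addnC; apply: leq_trans H; rewrite leq_add2r.
Qed.
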